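(* Let $\|\cdot\|$ be a norm on $\mathbb{R}^n$ and let $A,B>0$ and $1<q\le p$ be constants such that $$A\|e-\bar e\|^p\le 2-\|e+\bar e\|\quad\text{whenever } \|e\|=\|\bar e\|=1,$$ and $$\|x+y\|+\|x-y\|-2\|x\|\le \frac{B}{\|x\|^{q-1}}\|y\|^q\quad\text{for all } x\neq 0,\ y\in\mathbb{R}^n.$$ Let $R>0$. Then there is a constant $C=C(A,B,R,p,q)$ such that the following holds. Suppose $l_0,l_1,\bar l_0,\bar l_1\in\mathbb{R}^n$ satisfy $$\|l_1-\bar l_0\|\ge\|l_1-l_0\|,\qquad \|\bar l_1-l_0\|\ge\|\bar l_1-\bar l_0\|,\qquad \|l_1-l_0\|=\|\bar l_1-\bar l_0\|=1,$$ and $\|l_1-\bar l_1\|\le R$. Writing $l_t=(1-t)l_0+tl_1$, $\bar l_t=(1-t)\bar l_0+t\bar l_1$, we have $$\|l_1-\bar l_1\|\le \frac1t\, C\,\|l_t-\bar l_t\|^{q/p}\quad\text{for } 0<t\le 1,$$ and consequently $$\|l_1-\bar l_1\|\le \frac1t\, 2^{q/p}C\,\|l_t-\bar l_s\|^{q/p}\quad\text{for } 0<t\le s\le 1.$$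
   Context: The first displayed condition says $\|\cdot\|$ is ''$p$-uniformly convex'' and the second that it is ''$q$-uniformly smooth''. *)

(* Defs.v *)
From HB Require Import structures.
From mathcomp Require Import all_boot all_order all_algebra.
From mathcomp Require Import all_classical all_reals all_analysis.
Set Implicit Arguments. Unset Strict Implicit. Unset Printing Implicit Defensive.
Import Order.TTheory GRing.Theory Num.Theory.
Local Open Scope ring_scope.

Definition is_norm (R : realType) (n : nat) (N : 'rV[R]_n -> R) : Prop :=
  [/\ forall x y, N (x + y) <= N x + N y,
      forall (a : R) x, N (a *: x) = `|a| * N x
    & forall x, N x = 0 -> x = 0].

Definition p_uniformly_convex (R : realType) (n : nat) (N : 'rV[R]_n -> R)
    (A p : R) : Prop :=
  forall e e' : 'rV[R]_n, N e = 1 -> N e' = 1 ->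
    A * (N (e - e') `^ p) <= 2 - N (e + e').

Definition q_uniformly_smooth (R : realType) (n : nat) (N : 'rV[R]_n -> R)
    (B q : R) : Prop :=
  forall x y : 'rV[R]_n, x != 0 ->
    N (x + y) + N (x - y) - 2 * N x <= B / (N x `^ (q - 1)) * (N y `^ q).

Definition segpt (R : realType) (n : nat) (l0 l1 : 'rV[R]_n) (t : R) : 'rV[R]_n :=
  (1 - t) *: l0 + t *: l1.

(* Main.v *)
Require Import Defs.
From HB Require Import structures.
From mathcomp Require Import all_boot all_order all_algebra.
From mathcomp Require Import all_classical all_reals all_analysis.
From mathcomp Require Import lra.
Import Order.TTheory GRing.Theory Num.Theory.
Local Open Scope ring_scope.

Section NormFacts.
Local Set Implicit Arguments.
Local Unset Strict Implicit.
Variables (R : realType) (n : nat) (N : 'rV[R]_n -> R).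
Hypothesis hN : is_norm N.

Lemma N0 : N 0 = 0.
Proof.
case: hN => _ hs _; have := hs 0 0; rewrite scale0r normr0 mul0r //.
Qed.

Lemma Nopp x : N (- x) = N x.
Proof. case: hN => _ hs _; by rewrite -scaleN1r hs normrN normr1 mul1r. Qed.

Lemma Nge0 x : 0 <= N x.
Proof.
case: hN => ht _ _; have := ht x (- x); rewrite subrr N0 Nopp => h.
lra.
Qed.

Lemma Nsym x y : N (x - y) = N (y - x).
Proof. by rewrite -opprB Nopp. Qed.

Lemma NZ a x : 0 <= a -> N (a *: x) = a * N x.
Proof. case: hN => _ hs _ ha; by rewrite hs ger0_norm. Qed.

Lemma Ntri x y : N (x + y) <= N x + N y.
Proof. by case: hN. Qed.

Lemma Nconv a b x y : 0 <= a -> 0 <= b -> N (a *: x + b *: y) <= a * N x + b * N y.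
Proof. move=> ha hb; by rewrite -(@NZ _ x ha) -(@NZ _ y hb); exact: Ntri. Qed.

Lemma Nrev x y : N x <= N y + N (x - y).
Proof. have := Ntri y (x - y); by rewrite addrC subrK. Qed.

End NormFacts.
Section Key.
Local Set Implicit Arguments.
Local Unset Strict Implicit.
Variables (R : realType) (n : nat) (N : 'rV[R]_n -> R) (A B p q : R).
Hypothesis hN : is_norm N.
Hypothesis hC : p_uniformly_convex N A p.
Hypothesis hS : q_uniformly_smooth N B q.

Lemma key (U1 U2 y : 'rV[R]_n) (th ta : R) :
  0 <= th -> 0 < ta -> th + 2 * ta = 1 -> N U1 = 1 -> N U2 = 1 ->
  1 <= N (th *: U1 + (2 * ta) *: (2^-1 *: (U1 + U2) + y)) ->
  1 <= N (th *: U2 + (2 * ta) *: (2^-1 *: (U1 + U2) - y)) ->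
  2^-1 <= N (2^-1 *: (U1 + U2)) ->
  A * N (U1 - U2) `^ p <= B / N (2^-1 *: (U1 + U2)) `^ (q - 1) * N y `^ q.
Proof.
set m := 2^-1 *: (U1 + U2) => hth hta hsum h1 h2 hP hQ hm.
have ta2 : 0 <= 2 * ta by lra.
have e1 := Nconv hN U1 (m + y) hth ta2.
have e2 := Nconv hN U2 (m - y) hth ta2.
have mne : m != 0.
  apply/negP => /eqP m0; move: hm; rewrite m0 (N0 hN); lra.
have hs := hS y mne.
have huc := hC h1 h2.
have hm2 : N (U1 + U2) = 2 * N m.
  have -> : U1 + U2 = 2 *: m by rewrite /m scalerA mulfV ?scale1r.
  by rewrite (NZ hN).
rewrite h1 h2 in e1 e2.
have hX : 2 <= N (m + y) + N (m - y).
  have : 0 <= ta * (N (m + y) + N (m - y) - 2) by nra.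
  by rewrite pmulr_rge0 // subr_ge0.
lra.
Qed.

Lemma smallm (U1 y : 'rV[R]_n) (m : 'rV[R]_n) (th ta : R) :
  0 <= th -> 0 < ta -> th + 2 * ta = 1 -> N U1 = 1 ->
  1 <= N (th *: U1 + (2 * ta) *: (m + y)) ->
  N m < 2^-1 -> ta <= N ((2 * ta) *: y).
Proof.
move=> hth hta hsum h1 hP hm.
have ta2 : 0 <= 2 * ta by lra.
have e1 := Nconv hN U1 (m + y) hth ta2.
have e3 := Ntri hN m y.
rewrite (NZ hN _ ta2); rewrite h1 in e1.
nra.
Qed.
End Key.
Section Pow.
Variable R : realType.
Local Set Implicit Arguments.
Local Unset Strict Implicit.

Lemma L1 (p q x Y c : R) : 0 < p -> 0 <= x -> 0 <= Y -> 0 <= c ->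
  x `^ p <= c * Y `^ q -> x <= c `^ (p^-1) * Y `^ (q / p).
Proof.
move=> hp hx hY hc h.
have -> : x = (x `^ p) `^ (p^-1) by rewrite -powRrM mulfV ?gt_eqF // powRr1.
have hpi : 0 <= p^-1 by rewrite invr_ge0 ltW.
apply: (le_trans (ge0_ler_powR hpi _ _ h)).
- by rewrite nnegrE powR_ge0.
- by rewrite nnegrE mulr_ge0 // powR_ge0.
by rewrite powRM ?powR_ge0 // -powRrM.
Qed.

Lemma L2 (x r : R) : 0 <= x <= 1 -> 0 <= r <= 1 -> x <= x `^ r.
Proof.
move=> /andP[hx0 hx1] /andP[hr0 hr1].
have [->|xpos] := eqVneq x 0; first exact: powR_ge0.
apply: ger1_powR => //; rewrite hx1 andbT lt_neqAle eq_sym xpos //.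
Qed.

Lemma L3 (x r M : R) : 0 <= x <= M -> 1 <= M -> 0 <= r <= 1 -> x <= M * x `^ r.
Proof.
move=> /andP[hx0 hxM] hM hr.
have [x1|x1] := leP x 1.
  have h := L2 (andb_true_intro (conj hx0 x1)) hr.
  have := powR_ge0 x r; nra.
have : 1 <= x `^ r.
  have := ler_powR (a:=x) (ltW x1) (x:=0) (y:=r); rewrite powRr0.
  by case/andP: hr => h _ /(_ h).
nra.
Qed.

Lemma divt (t a b : R) : 0 < t -> t * a <= b -> a <= t^-1 * b.
Proof.
move=> ht h; rewrite -(ler_pM2l ht) mulrA mulfV ?gt_eqF // mul1r //.
Qed.

Lemma finish (A B p q M K0 c t ta d Nd Nw : R) :
  0 < A -> 0 < B -> 0 < p -> 0 < q -> q <= p -> 1 <= M -> 0 <= K0 ->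
  c = B / (2^-1) `^ (q - 1) / A -> K0 = c `^ (p^-1) ->
  0 < t <= 1 -> 0 < ta -> 2 * ta <= 1 -> t * (1 - t) <= 2 * ta ->
  0 <= d <= 2 -> 0 <= Nw <= M -> 0 <= Nd -> Nd <= Nw + (1 - t) * d ->
  (t = 1 \/ ta <= Nw \/ A * d `^ p <= B / (2^-1) `^ (q - 1) * ((2 * ta)^-1 * Nw) `^ q) ->
  Nd <= t^-1 * (5 * M + K0) * Nw `^ (q / p).
Proof.
move=> hA hB hp hq hqp hM hK0 hc hK /andP[ht0 ht1] hta hta1 htt /andP[hd0 hd2]
  /andP[hw0 hwM] hNd hle hcase.
have hr : 0 <= q / p <= 1.
  apply/andP; split; first by rewrite divr_ge0 ?ltW.
  by rewrite ler_pdivrMr // mul1r.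
have hX := L3 (andb_true_intro (conj hw0 hwM)) hM hr.
have hX0 : 0 <= Nw `^ (q / p) := powR_ge0 _ _.
have htt1 : t * t^-1 = 1 by rewrite mulfV ?gt_eqF.
have hti : 0 < t^-1 by rewrite invr_gt0.
case: hcase => [et|[hsm|hbig]].
  subst t; rewrite invr1 mul1r.
  have : Nd <= Nw by lra.
  nra.
  have h1 : (1 - t) * d <= 2 * (1 - t) by nra.
  have h2 : t * (2 * (1 - t)) <= 4 * Nw by nra.
  have h3 : 2 * (1 - t) <= t^-1 * (4 * Nw).
    exact: divt.
  have h4 : Nw <= t^-1 * Nw by nra.
  have h5 : Nd <= t^-1 * (5 * Nw) by nra.
  apply: (le_trans h5).
  have : 5 * Nw <= (5 * M + K0) * Nw `^ (q / p) by nra.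
  by rewrite -mulrA; move=> h; rewrite ler_pM2l.
have hc0 : 0 <= c.
  rewrite hc; apply: divr_ge0; last exact: ltW.
  apply: divr_ge0; [exact: ltW | exact: powR_ge0].
have hY0 : 0 <= (2 * ta)^-1 * Nw by rewrite mulr_ge0 // invr_ge0 ltW // mulr_gt0.
have hdp : d `^ p <= c * ((2 * ta)^-1 * Nw) `^ q.
  by rewrite hc mulrAC ler_pdivlMr // mulrC.
have hd := L1 hp hd0 hY0 hc0 hdp.
rewrite -hK in hd.
set Z := ((2 * ta)^-1 * Nw) `^ (q / p) in hd.
have hZ0 : 0 <= Z := powR_ge0 _ _.
have hZX : Nw `^ (q / p) = (2 * ta) `^ (q / p) * Z.
  rewrite /Z -powRM ?mulrA ?mulfV ?mul1r ?gt_eqF ?mulr_gt0 // ltW // mulr_gt0 //.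
have h2t : 2 * ta <= (2 * ta) `^ (q / p).
  apply: L2 => //; rewrite hta1 andbT mulr_ge0 // ltW //.
have hkey : t * ((1 - t) * d) <= K0 * Nw `^ (q / p).
  rewrite hZX.
  have : t * (1 - t) <= (2 * ta) `^ (q / p) by lra.
  nra.
have h6 : (1 - t) * d <= t^-1 * (K0 * Nw `^ (q / p)).
  exact: divt.
have h7 : Nw <= t^-1 * (M * Nw `^ (q / p)).
  apply: (le_trans hX); have : M * Nw `^ (q / p) >= 0 by nra.
  move=> hh; rewrite -[X in X <= _]mul1r ler_wpM2r //.
  by rewrite -[1]invr1 lef_pV2 ?posrE // ltr01.
have : Nd <= t^-1 * (M * Nw `^ (q / p)) + t^-1 * (K0 * Nw `^ (q / p)) by lra.
move=> h8; apply: (le_trans h8); rewrite -mulrDr -mulrA.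
rewrite ler_pM2l //; nra.
Qed.
End Pow.
Section Cases.
Local Set Implicit Arguments.
Local Unset Strict Implicit.
Variables (R : realType) (n : nat) (N : 'rV[R]_n -> R) (A B p q : R).
Hypothesis hN : is_norm N.
Hypothesis hC : p_uniformly_convex N A p.
Hypothesis hS : q_uniformly_smooth N B q.

Lemma cases (U1 U2 w : 'rV[R]_n) (th ta : R) :
  1 < q -> 0 < B ->
  0 <= th -> 0 < ta -> th + 2 * ta = 1 -> N U1 = 1 -> N U2 = 1 ->
  1 <= N (th *: U1 + (2 * ta) *: (2^-1 *: (U1 + U2) + (2 * ta)^-1 *: w)) ->
  1 <= N (th *: U2 + (2 * ta) *: (2^-1 *: (U1 + U2) - (2 * ta)^-1 *: w)) ->
  ta <= N w \/ A * N (U1 - U2) `^ p <= B / (2^-1) `^ (q - 1) * ((2 * ta)^-1 * N w) `^ q.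
Proof.
move=> hq hB hth hta hsum h1 h2 hP hQ.
have ta2 : 0 < 2 * ta by rewrite mulr_gt0.
have hNy : N ((2 * ta)^-1 *: w) = (2 * ta)^-1 * N w.
  by rewrite (NZ hN) // invr_ge0 ltW.
have [hm|hm] := leP (2^-1) (N (2^-1 *: (U1 + U2))).
  right.
  have := key hN hC hS hth hta hsum h1 h2 hP hQ hm.
  rewrite hNy => h; apply: (le_trans h).
  apply: ler_wpM2r; first exact: powR_ge0.
  apply: ler_wpM2l; first exact: ltW.
  have h0 : 0 < (2^-1 : R) `^ (q - 1) by rewrite powR_gt0.
  have hle : (2^-1 : R) `^ (q - 1) <= N (2^-1 *: (U1 + U2)) `^ (q - 1).
    apply: ge0_ler_powR => //; first by rewrite subr_ge0 ltW.
    by rewrite nnegrE.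
    by rewrite nnegrE (Nge0 hN).
  by rewrite lef_pV2 // posrE (lt_le_trans h0 hle).
left.
have := smallm hN hth hta hsum h1 hP hm.
by rewrite scalerA mulfV ?gt_eqF // scale1r.
Qed.
End Cases.
From mathcomp Require Import ring.
Lemma finish2 (R : realType) (A B p q Rad t ta d Nd Nw : R) :
  0 < A -> 0 < B -> 1 < q -> q <= p -> 0 < Rad -> 0 < t -> t <= 1 ->
  0 < ta -> 2 * ta <= 1 -> t * (1 - t) <= 2 * ta ->
  0 <= d -> d <= 2 -> 0 <= Nw -> 0 <= Nd -> Nd <= Nw + (1 - t) * d ->
  Nw <= Nd + (1 - t) * d -> Nd <= Rad ->
  (t = 1 \/ ta <= Nw \/ A * d `^ p <= B / (2^-1) `^ (q - 1) * ((2 * ta)^-1 * Nw) `^ q) ->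
  Nd <= t^-1 * (5 * (Rad + 2) + (B / (2^-1) `^ (q - 1) / A) `^ (p^-1)) * Nw `^ (q / p).
Proof.
move=> hA hB hq hqp hR ht0 ht1 hta hta1 htt hd0 hd2 hw0 hNd0 hle hle2 hR2 hcase.
have hwM : Nw <= Rad + 2.
  have : (1 - t) * d <= 2 by nra.
  lra.
have hM : 1 <= Rad + 2 by lra.
have hp : 0 < p by lra.
have hq0 : 0 < q by lra.
apply: (finish (A := A) (B := B) (p := p) (q := q) (M := Rad + 2) (t := t) (ta := ta)
   (d := d) (Nd := Nd) (Nw := Nw) (c := B / (2^-1) `^ (q - 1) / A)) => //.
all: try exact: powR_ge0.
all: by apply/andP; split.
Qed.

Lemma part1 (R : realType) (A B p q Rad : R) (n : nat) (N : 'rV[R]_n -> R)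
  (l0 l1 lb0 lb1 : 'rV[R]_n) (t : R) :
  0 < A -> 0 < B -> 1 < q -> q <= p -> 0 < Rad ->
  is_norm N -> p_uniformly_convex N A p -> q_uniformly_smooth N B q ->
  N (l1 - lb0) >= N (l1 - l0) -> N (lb1 - l0) >= N (lb1 - lb0) ->
  N (l1 - l0) = 1 -> N (lb1 - lb0) = 1 -> N (l1 - lb1) <= Rad ->
  0 < t <= 1 ->
  N (l1 - lb1) <= t^-1 * (5 * (Rad + 2) + (B / (2^-1) `^ (q - 1) / A) `^ (p^-1))
     * N (segpt l0 l1 t - segpt lb0 lb1 t) `^ (q / p).
Proof.
move=> hA hB hq hqp hR hN hC hS g1 g2 g3 g4 g5 /andP[ht0 ht1].
have hd : l1 - lb1 = (segpt l0 l1 t - segpt lb0 lb1 t) + (1 - t) *: ((l1 - l0) - (lb1 - lb0)).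
  apply/rowP => k; rewrite /segpt !mxE; ring.
have hw : segpt l0 l1 t - segpt lb0 lb1 t = (l1 - lb1) + (1 - t) *: ((lb1 - lb0) - (l1 - l0)).
  apply/rowP => k; rewrite /segpt !mxE; ring.
have t1 : 0 <= 1 - t by move: ht1; clear; lra.
have hdel0 := Nge0 hN ((l1 - l0) - (lb1 - lb0)).
have hdel2 : N ((l1 - l0) - (lb1 - lb0)) <= 2.
  have := Ntri hN (l1 - l0) (- (lb1 - lb0)); rewrite Nopp // g3 g4.
  by rewrite (_ : 1 + 1 = 2 :> R) //; clear; lra.
have hNd : N (l1 - lb1) <= N (segpt l0 l1 t - segpt lb0 lb1 t)
     + (1 - t) * N ((l1 - l0) - (lb1 - lb0)).
  by rewrite {1}hd -(NZ hN _ t1); apply: Ntri.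
have hNw : N (segpt l0 l1 t - segpt lb0 lb1 t) <= N (l1 - lb1)
     + (1 - t) * N ((l1 - l0) - (lb1 - lb0)).
  by rewrite {1}hw (Nsym hN (l1 - l0)) -(NZ hN _ t1); apply: Ntri.
have hw0 := Nge0 hN (segpt l0 l1 t - segpt lb0 lb1 t).
have hNd0 := Nge0 hN (l1 - lb1).
rewrite g3 in g1; rewrite g4 in g2.
have F := fun ta (h1 : 0 < ta) (h2 : 2 * ta <= 1) (h3 : t * (1 - t) <= 2 * ta) =>
  @finish2 _ A B p q Rad t ta _ _ _ hA hB hq hqp hR ht0 ht1 h1 h2 h3 hdel0 hdel2 hw0 hNd0 hNd hNw g5.
have [et|tne] := eqVneq t 1.
  apply: (F (2^-1)).
  - by rewrite invr_gt0 ltr0n.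
  - by rewrite mulfV.
  - by rewrite et subrr mulr0 mulfV.
  - by left.
have tlt : t < 1 by rewrite lt_neqAle tne ht1.
have [th2|th2] := leP t 2^-1.
  have ta2 : 2 * t != 0 by rewrite mulf_neq0 // gt_eqF.
  have := cases hN hC hS (U1 := l1 - l0) (U2 := lb1 - lb0)
     (w := segpt l0 l1 t - segpt lb0 lb1 t) (th := 1 - 2 * t) (ta := t) hq hB.
  have e1 : (1 - 2 * t) *: (l1 - l0) + (2 * t) *: (2^-1 *: (l1 - l0 + (lb1 - lb0))
       + (2 * t)^-1 *: (segpt l0 l1 t - segpt lb0 lb1 t)) = l1 - lb0.
    apply/rowP => k; rewrite /segpt !mxE; field; rewrite ?gt_eqF ?subr_gt0 //.
  have e2 : (1 - 2 * t) *: (lb1 - lb0) + (2 * t) *: (2^-1 *: (l1 - l0 + (lb1 - lb0))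
       - (2 * t)^-1 *: (segpt l0 l1 t - segpt lb0 lb1 t)) = lb1 - l0.
    apply/rowP => k; rewrite /segpt !mxE; field; rewrite ?gt_eqF ?subr_gt0 //.
  have h2t : 2 * t <= 1.
    by move: th2; clear; rewrite -(ler_pM2l (ltr0n _ 2)) mulfV.
  have h0 : 0 <= 1 - 2 * t by move: h2t; clear; lra.
  have hs : 1 - 2 * t + 2 * t = 1 by move: h2t; clear; lra.
  rewrite e1 e2 => /(_ h0 ht0 hs g3 g4 g1 g2) H.
  apply: (F t) => //.
  - by move: ht0 ht1; clear; nra.
  - by right.
have ta2 : 2 * (1 - t) != 0 by rewrite mulf_neq0 // gt_eqF // subr_gt0.
have := cases hN hC hS (U1 := lb1 - lb0) (U2 := l1 - l0)
   (w := segpt l0 l1 t - segpt lb0 lb1 t) (th := 2 * t - 1) (ta := 1 - t) hq hB.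
have e1 : (2 * t - 1) *: (lb1 - lb0) + (2 * (1 - t)) *: (2^-1 *: (lb1 - lb0 + (l1 - l0))
     + (2 * (1 - t))^-1 *: (segpt l0 l1 t - segpt lb0 lb1 t)) = l1 - lb0.
  apply/rowP => k; rewrite /segpt !mxE; field; rewrite ?gt_eqF ?subr_gt0 //.
have e2 : (2 * t - 1) *: (l1 - l0) + (2 * (1 - t)) *: (2^-1 *: (lb1 - lb0 + (l1 - l0))
     - (2 * (1 - t))^-1 *: (segpt l0 l1 t - segpt lb0 lb1 t)) = lb1 - l0.
  apply/rowP => k; rewrite /segpt !mxE; field; rewrite ?gt_eqF ?subr_gt0 //.
have h2t : 1 <= 2 * t.
  by move: th2; clear; rewrite -(ltr_pM2l (ltr0n _ 2)) mulfV // => /ltW.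
have h0 : 0 <= 2 * t - 1 by move: h2t; clear; lra.
have h1t : 0 < 1 - t by move: tlt; clear; lra.
have hs : 2 * t - 1 + 2 * (1 - t) = 1 by clear; lra.
rewrite e1 e2 (Nsym hN (lb1 - lb0)) => /(_ h0 h1t hs g4 g3 g1 g2) H.
apply: (F (1 - t)) => //.
- by move: h2t; clear; lra.
- by move: ht0 ht1; clear; nra.
- by right.
Qed.
Theorem proposition3p7 (R : realType) (A B p q Rad : R) :
  0 < A -> 0 < B -> 1 < q -> q <= p -> 0 < Rad ->
  exists C : R,
    forall (n : nat) (N : 'rV[R]_n -> R),
      is_norm N -> p_uniformly_convex N A p -> q_uniformly_smooth N B q ->
      forall l0 l1 lb0 lb1 : 'rV[R]_n,
        N (l1 - lb0) >= N (l1 - l0) ->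
        N (lb1 - l0) >= N (lb1 - lb0) ->
        N (l1 - l0) = 1 -> N (lb1 - lb0) = 1 ->
        N (l1 - lb1) <= Rad ->
        (forall t : R, 0 < t <= 1 ->
           N (l1 - lb1) <= t^-1 * C * (N (segpt l0 l1 t - segpt lb0 lb1 t) `^ (q / p)))
        /\
        (forall t s : R, 0 < t -> t <= s -> s <= 1 ->
           N (l1 - lb1) <= t^-1 * (2 `^ (q / p)) * C *
                            (N (segpt l0 l1 t - segpt lb0 lb1 s) `^ (q / p))).
Proof.
move=> hA hB hq hqp hR.
exists (5 * (Rad + 2) + (B / (2^-1) `^ (q - 1) / A) `^ (p^-1)).
move=> n N hN hC hS l0 l1 lb0 lb1 g1 g2 g3 g4 g5; split.
  by move=> t ht; apply: part1.
move=> t s ht0 hts hs1.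
have ht : 0 < t <= 1 by rewrite ht0 /=; lra.
have P := @part1 _ A B p q Rad n N l0 l1 lb0 lb1 t hA hB hq hqp hR hN hC hS g1 g2 g3 g4 g5 ht.
have e1 : segpt l0 l1 t - segpt lb0 lb1 t =
   (segpt l0 l1 t - segpt lb0 lb1 s) + (s - t) *: (lb1 - lb0).
  apply/rowP => k; rewrite /segpt !mxE; ring.
have e2 : lb1 - l0 = ((1 - s) *: (lb1 - lb0) - (segpt l0 l1 t - segpt lb0 lb1 s))
   + t *: (l1 - l0).
  apply/rowP => k; rewrite /segpt !mxE; ring.
have st : 0 <= s - t by lra.
have s1 : 0 <= 1 - s by lra.
set X := N (segpt l0 l1 t - segpt lb0 lb1 s).
set W := N (segpt l0 l1 t - segpt lb0 lb1 t).
have hX0 : 0 <= X := Nge0 hN _.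
have hW0 : 0 <= W := Nge0 hN _.
have hW : W <= X + (s - t).
  rewrite /W e1; apply: (le_trans (Ntri hN _ _)).
  by rewrite (NZ hN _ st) g4 mulr1.
have hXs : s - t <= X.
  rewrite g4 in g2; move: g2; rewrite e2 => g2.
  have h1 := Ntri hN ((1 - s) *: (lb1 - lb0) - (segpt l0 l1 t - segpt lb0 lb1 s)) (t *: (l1 - l0)).
  have h2 := Ntri hN ((1 - s) *: (lb1 - lb0)) (- (segpt l0 l1 t - segpt lb0 lb1 s)).
  rewrite Nopp // (NZ hN _ s1) g4 in h2.
  rewrite (NZ hN _ (ltW ht0)) g3 in h1.
  rewrite -/X in h2.
  move: g2 h1 h2; clear; lra.
have hr : 0 <= q / p by rewrite divr_ge0 // ltW //; lra.
have hWr : W `^ (q / p) <= 2 `^ (q / p) * X `^ (q / p).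
  rewrite -powRM; [ | lra | exact: hX0].
  apply: ge0_ler_powR => //.
  - by rewrite nnegrE mulr_ge0.
  - lra.
apply: (le_trans P).
have hK := powR_ge0 (B / (2^-1) `^ (q - 1) / A) (p^-1).
have hC0 : 0 <= 5 * (Rad + 2) + (B / (2^-1) `^ (q - 1) / A) `^ (p^-1).
  by move: hK hR; clear; lra.
have hti : 0 <= t^-1 by rewrite invr_ge0 ltW.
rewrite -/W; apply: le_trans (ler_wpM2l _ hWr) _; first exact: mulr_ge0.
rewrite !mulrA (mulrAC t^-1 _ (2 `^ (q / p))); exact: lexx.
Qed.
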